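(* Let $K$ be an infinite, algebraically closed, totally ordered quasi-field of characteristic $1$, and let $P,Q\in K[X_1,\dots,X_n]$. (a) The polynomial functions $K^n\to K$ defined by $P$ and by its convex hull $\mathrm{conv}(P)$ coincide. (b) The polynomial functions $\tilde P$ and $\tilde Q$ are equal if and only if $\mathrm{conv}(P)=\mathrm{conv}(Q)$.
   Context: A quasi-field of characteristic $1$ is a commutative semiring $K$ with $1+1=1$ in which every nonzero element is multiplicatively invertible; ordered by $u\le v$ iff $u+v=v$, totally ordered meaning the order is total (so $u+v=\max(u,v)$). $K$ is algebraically closed if every nonconstant polynomial of $K[X]$ has a root in $K$ (a root of $P$ being a point where $P$ vanishes or where the maximum of its monomials is attained at least twice); in particular every element has unique $m$-th roots. For $P=\sum_{\alpha\in I}\lambda_\alpha X^\alpha$ ($I\subset\mathbb N^n$ finite, $\lambda_\alpha\neq0$), $\mathrm{conv}(P)=\sum_{\gamma}\mu_\gamma X^\gamma$, the sum over lattice points $\gamma\in\mathbb N^n$ of the convex hull of $I$, where $\mu_\gamma$ is the largest value of $\left(\prod_{\alpha\in I}\lambda_\alpha^{c_\alpha}\right)^{1/m}$ over all $m\ge1$ and $c_\alpha\in\mathbb N$ with $\sum c_\alpha=m$ and $\sum c_\alpha\alpha=m\gamma$; equivalently, the smallest ''convex'' polynomial $\ge P$. $\tilde P:K^n\to K$ denotes $x\mapsto P(x)$. *)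

(* Defs.v *)
From HB Require Import structures.
From mathcomp Require Import all_boot all_order all_algebra.
From Stdlib Require Import ClassicalEpsilon.
Set Implicit Arguments. Unset Strict Implicit. Unset Printing Implicit Defensive.
Import Order.TTheory GRing.Theory.
Local Open Scope ring_scope.

Section MPoly.
Variables (K : comNzSemiRingType) (n : nat).

Definition expo := (n.-tuple nat)%type.

Definition mono (a : expo) (x : 'I_n -> K) : K := \prod_(k < n) x k ^+ tnth a k.

Record mpoly := MPoly {
  mcoef : expo -> K;
  msupp : seq expo;
  msuppP : forall a, mcoef a != 0 -> a \in msupp }.

Definition mexps (P : mpoly) : seq expo :=
  [seq a <- undup (msupp P) | mcoef P a != 0].

Definition meval (P : mpoly) (x : 'I_n -> K) : K :=
  \sum_(a <- undup (msupp P)) mcoef P a * mono a x.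

Definition sle (u v : K) : Prop := u + v = v.

(* nu is one of the values (prod lambda_alpha^c_alpha)^(1/m), with m >= 1,
   sum c_alpha = m and sum c_alpha alpha = m gamma *)
Definition conv_cand (P : mpoly) (g : expo) (nu : K) : Prop :=
  exists (m : nat) (c : expo -> nat),
    [/\ (0 < m)%N,
        (\sum_(a <- mexps P) c a)%N = m,
        (forall k : 'I_n, (\sum_(a <- mexps P) c a * tnth a k)%N = (m * tnth g k)%N)
      & nu ^+ m = \prod_(a <- mexps P) mcoef P a ^+ c a].

Definition conv_max (P : mpoly) (g : expo) (mu : K) : Prop :=
  conv_cand P g mu /\ (forall nu, conv_cand P g nu -> sle nu mu).

(* mu_gamma (0 when gamma is not a lattice point of the convex hull, i.e.
   when there are no candidates) *)
Definition conv_coef (P : mpoly) (g : expo) : K :=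
  match excluded_middle_informative (exists mu, conv_max P g mu) with
  | left h => proj1_sig (constructive_indefinite_description _ h)
  | right _ => 0
  end.

Definition mbound (P : mpoly) : nat := \max_(a <- mexps P) \max_(k < n) tnth a k.

Definition boxseq (B : nat) : seq expo :=
  [seq map_tuple (fun i : 'I_B.+1 => nat_of_ord i) t | t <- enum {: n.-tuple 'I_B.+1}].

Lemma mem_boxseq B (g : expo) : (forall k, tnth g k <= B)%N -> g \in boxseq B.
Proof.
move=> hg; apply/mapP; exists (map_tuple (fun x => inord x) g); first by rewrite mem_enum.
by apply: eq_from_tnth => k; rewrite !tnth_map inordK // ltnS.
Qed.

Lemma conv_cand_bound P g nu : conv_cand P g nu -> forall k, (tnth g k <= mbound P)%N.
Proof.
case=> m [c [m0 hs hk _]] k.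
have : (m * tnth g k <= m * mbound P)%N.
  rewrite -hk -hs (big_distrl (R:=nat)) /= !big_seq; apply: leq_sum => a ha.
  rewrite leq_mul2l; apply/orP; right.

  apply: leq_trans (@leq_bigmax_seq _ _ xpredT (fun b : expo => \max_(k0 < n) tnth b k0) a ha isT).
  exact: (@leq_bigmax _ (fun k0 => tnth a k0) k).
by rewrite leq_pmul2l.
Qed.

Lemma conv_suppP P g : conv_coef P g != 0 -> g \in boxseq (mbound P).
Proof.
rewrite /conv_coef; case: excluded_middle_informative => [[mu [hc _]] _|]; last by rewrite eqxx.
by apply: mem_boxseq; exact: conv_cand_bound hc.
Qed.

Definition conv (P : mpoly) : mpoly := MPoly (@conv_suppP P).

Definition qroot (p : {poly K}) (x : K) : Prop :=
  p.[x] = 0 \/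
  exists i j : nat, [/\ i <> j, (i < size p)%N, (j < size p)%N,
                        p`_i * x ^+ i = p.[x] & p`_j * x ^+ j = p.[x]].

End MPoly.

Definition qf_alg_closed (K : comNzSemiRingType) : Prop :=
  forall p : {poly K}, (1 < size p)%N -> exists x, qroot p x.

(* Main.v *)
Require Import Defs.
From HB Require Import structures.
From mathcomp Require Import all_boot all_order all_algebra.
From Stdlib Require Import ClassicalEpsilon.
Set Implicit Arguments. Unset Strict Implicit. Unset Printing Implicit Defensive.
Import Order.TTheory GRing.Theory Num.Theory.
Local Open Scope ring_scope.
Section Units.
Variable K : comNzSemiRingType.

Definition isu (x : K) : bool :=
  if excluded_middle_informative (exists y, x * y = 1) then true else false.

Lemma isuP x : reflect (exists y, x * y = 1) (isu x).
Proof. rewrite /isu; case: excluded_middle_informative => h; constructor => //. Qed.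

Definition GU := {x : K | isu x}.
HB.instance Definition _ := [Choice of GU by <:].

Lemma isu1 : isu (1 : K). Proof. by apply/isuP; exists 1; rewrite mulr1. Qed.
Lemma isuM (x y : K) : isu x -> isu y -> isu (x * y).
Proof.
move=> /isuP[x' hx] /isuP[y' hy]; apply/isuP; exists (x' * y').
by rewrite mulrACA hx hy mulr1.
Qed.
Definition kinv (x : K) : K :=
  match excluded_middle_informative (exists y, x * y = 1) with
  | left h => proj1_sig (constructive_indefinite_description _ h)
  | right _ => 1 end.
Lemma kinvP x : isu x -> x * kinv x = 1.
Proof.
rewrite /kinv; case: excluded_middle_informative => h; last by move/isuP.
by case: constructive_indefinite_description.
Qed.
Lemma isuV x : isu x -> isu (kinv x).
Proof. by move=> hx; apply/isuP; exists x; rewrite mulrC kinvP. Qed.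

Definition gu0 : GU := exist _ 1 isu1.
Definition guadd (u v : GU) : GU := exist _ (val u * val v) (isuM (valP u) (valP v)).
Definition guopp (u : GU) : GU := exist _ (kinv (val u)) (isuV (valP u)).

Lemma guaddA : associative guadd.
Proof. by move=> u v w; apply: val_inj; rewrite /= mulrA. Qed.
Lemma guaddC : commutative guadd.
Proof. by move=> u v; apply: val_inj; rewrite /= mulrC. Qed.
Lemma gu0add : left_id gu0 guadd.
Proof. by move=> u; apply: val_inj; rewrite /= mul1r. Qed.
Lemma guoppadd : left_inverse gu0 guopp guadd.
Proof. by move=> u; apply: val_inj; rewrite /= mulrC kinvP // (valP u). Qed.

HB.instance Definition _ := GRing.isZmodule.Build GU guaddA guaddC gu0add guoppadd.

Lemma valD (u v : GU) : val (u + v) = val u * val v. Proof. by []. Qed.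
Lemma val0 : val (0 : GU) = 1. Proof. by []. Qed.
Lemma valMn (u : GU) m : val (u *+ m) = val u ^+ m.
Proof. elim: m => [|m ih]; first by rewrite mulr0n expr0. by rewrite mulrS valD ih exprS. Qed.
Lemma val_sum I (s : seq I) (F : I -> GU) : val (\sum_(i <- s) F i) = \prod_(i <- s) val (F i).
Proof. elim: s => [|a s ih]; first by rewrite !big_nil. by rewrite !big_cons valD ih. Qed.
End Units.
Definition comb (W : zmodType) (N : nat) (c : nat -> nat) (l : nat -> W) : W :=
  \sum_(i < N) l i *+ c i.

Section OG.
Variables (V : zmodType) (le : rel V).
Hypothesis le_refl : forall x, le x x.
Hypothesis le_trans : forall x y z, le x y -> le y z -> le x z.
Hypothesis le_anti : forall x y, le x y -> le y x -> x = y.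
Hypothesis le_total : forall x y, le x y || le y x.
Hypothesis le_add : forall x y z, le x y -> le (x + z) (y + z).
Hypothesis hdiv : forall m x, exists y : V, y *+ m.+1 = x.

Lemma leD2 x y z w : le x y -> le z w -> le (x + z) (y + w).
Proof.
move=> h1 h2; apply: (le_trans (le_add z h1)).
by rewrite ![y + _]addrC; apply: le_add.
Qed.

Lemma le_subr x y : le x y -> le (x - y) 0.
Proof. by move=> h; have := le_add (- y) h; rewrite subrr. Qed.
Lemma le_subl x y : le (x - y) 0 -> le x y.
Proof. by move=> h; have := le_add y h; rewrite subrK add0r. Qed.

Lemma le_opp x y : le x y -> le (- y) (- x).
Proof.
move=> h; apply: le_subl; rewrite opprK addrC; exact: le_subr.
Qed.

Lemma le_sum (I : eqType) (s : seq I) (F G : I -> V) :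
  (forall i, i \in s -> le (F i) (G i)) -> le (\sum_(i <- s) F i) (\sum_(i <- s) G i).
Proof.
elim: s => [|a s ih] h; first by rewrite !big_nil.
rewrite !big_cons; apply: leD2; first by apply: h; rewrite inE eqxx.
by apply: ih => i hi; apply: h; rewrite inE hi orbT.
Qed.

Lemma leMn (x y : V) m : le x y -> le (x *+ m) (y *+ m).
Proof.
move=> h; elim: m => [|m ih]; first by rewrite !mulr0n.
by rewrite !mulrS; apply: leD2.
Qed.

Lemma torsion (x : V) m : x *+ m.+1 = 0 -> x = 0.
Proof.
have key : forall z : V, le 0 z -> z *+ m.+1 = 0 -> z = 0.
  move=> z hz hm; apply: le_anti => //.
  have : le (z + 0) (z *+ m.+1).
    by rewrite mulrS; apply: leD2 => //; have := leMn m hz; rewrite mul0rn.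
  by rewrite addr0 hm.
move=> hm; case/orP: (le_total 0 x) => h; first exact: key.
have h' : le 0 (- x) by rewrite -oppr0; apply: le_opp.
apply/eqP; rewrite -oppr_eq0; apply/eqP; apply: key => //.
by rewrite mulNrn hm oppr0.
Qed.

Lemma leMn2 (x y : V) m : le (x *+ m.+1) (y *+ m.+1) -> le x y.
Proof.
move=> h; case/orP: (le_total x y) => // h2.
have e : x = y.
  apply/eqP; rewrite -subr_eq0; apply/eqP; apply: (@torsion _ m).
  rewrite mulrnBl; apply/eqP; rewrite subr_eq0; apply/eqP.
  by apply: le_anti => //; apply: leMn.
by rewrite e.
Qed.

Definition dv (m : nat) (x : V) : V := proj1_sig (constructive_indefinite_description _ (hdiv m.-1 x)).
Lemma dvK m x : (0 < m)%N -> dv m x *+ m = x.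
Proof. by case: m => // m _; rewrite /dv; case: constructive_indefinite_description. Qed.

Lemma exists_max (T : eqType) (s : seq T) (f : T -> V) : s != [::] ->
  exists2 x, x \in s & forall y, y \in s -> le (f y) (f x).
Proof.
elim: s => // a s ih _; case: (eqVneq s [::]) => [->|hs].
  by exists a; rewrite ?inE ?eqxx // => y; rewrite inE => /eqP ->.
have [b hb hmax] := ih hs.
case/orP: (le_total (f a) (f b)) => h.
  exists b; first by rewrite inE hb orbT.
  by move=> y; rewrite inE => /orP[/eqP ->|]; last exact: hmax.
exists a; first by rewrite inE eqxx.
move=> y; rewrite inE => /orP[/eqP ->|hy] //; exact: le_trans (hmax _ hy) h.
Qed.

Lemma choose_between (lo hi : seq (V * nat)) :
  (forall u, u \in lo -> (0 < u.2)%N) -> (forall w, w \in hi -> (0 < w.2)%N) ->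
  (forall u w, u \in lo -> w \in hi -> le (u.1 *+ w.2) (w.1 *+ u.2)) ->
  exists z, (forall u, u \in lo -> le u.1 (z *+ u.2)) /\
            (forall w, w \in hi -> le (z *+ w.2) w.1).
Proof.
move=> hlo hhi hc.
case: (eqVneq lo [::]) => [elo|nlo].
  case: (eqVneq hi [::]) => [ehi|nhi].
    by exists 0; rewrite elo ehi.
  have [w0 hw0 hmin] := exists_max (fun w => - dv w.2 w.1) nhi.
  exists (dv w0.2 w0.1); split; first by rewrite elo.
  move=> w hw; have := le_opp (hmin w hw); rewrite !opprK => h.
  rewrite -[X in le _ X](dvK w.1 (hhi w hw)); exact: leMn.
have [u0 hu0 hmax] := exists_max (fun u => dv u.2 u.1) nlo.
exists (dv u0.2 u0.1); split.
  move=> u hu; rewrite -[X in le X _](dvK u.1 (hlo u hu)); exact: leMn (hmax u hu).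
move=> w hw; have hp := hlo u0 hu0; move: hp; case e : u0.2 => [//|m] _.
apply: (@leMn2 _ _ m); rewrite -mulrnA mulnC mulrnA -e dvK; last by rewrite e.
exact: hc.
Qed.

Definition dot n (y : nat -> V) (a : nat -> int) : V := \sum_(k < n) y k *~ a k.

Lemma mulrzMn (x : V) (z : int) m : x *~ (z *+ m) = x *~ z *+ m.
Proof. by elim: m => [|m ih]; rewrite ?mulr0n ?mulr0z // !mulrS mulrzDr ih. Qed.

Lemma comb_row N d (l : nat -> V) y n (a : nat -> nat -> int) :
  comb N d (fun i => l i + dot n y (a i)) =
  comb N d l + dot n y (fun k => comb N d (fun i => a i k)).
Proof.
rewrite /comb /dot.
under eq_bigr do rewrite mulrnDl.
rewrite big_split /=; congr (_ + _).
under eq_bigr do rewrite -sumrMnl.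
rewrite exchange_big /=; apply: eq_bigr => k _.
rewrite mulrz_sumr; apply: eq_bigr => i _; by rewrite mulrzMn.
Qed.

Lemma comb_comb (W : zmodType) N N' (C : nat -> nat) (D : nat -> nat -> nat) (l : nat -> W) :
  comb N (fun i => \sum_(j < N') C j * D j i)%N l = comb N' C (fun j => comb N (D j) l).
Proof.
rewrite /comb.
under eq_bigr do rewrite -sumrMnr.
under [RHS]eq_bigr do rewrite -sumrMnl.
rewrite exchange_big /=; apply: eq_bigr => j _; apply: eq_bigr => i _.
by rewrite -mulrnA mulnC.
Qed.

Definition ev (i : nat) : nat -> nat := fun i' => nat_of_bool (i' == i).

Lemma comb_ev (W : zmodType) N i (l : nat -> W) : (i < N)%N -> comb N (ev i) l = l i.
Proof.
move=> hi; rewrite /comb (bigD1 (Ordinal hi)) //= /ev eqxx mulr1n big1 ?addr0 //.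
move=> j hj; suff /negbTE -> : (j : nat) != i by rewrite mulr0n.
by apply: contra hj => /eqP e; apply/eqP/val_inj.
Qed.

Lemma comb0 (W : zmodType) N c (l : nat -> W) :
  (forall i, (i < N)%N -> l i = 0) -> comb N c l = 0.
Proof. by move=> h; rewrite /comb big1 // => i _; rewrite h // mul0rn. Qed.

Lemma comb_pq (W : zmodType) N p q (x y : nat) (l : nat -> W) : (p < N)%N -> (q < N)%N ->
  comb N (fun i' => (ev p i' * x + ev q i' * y)%N) l = l p *+ x + l q *+ y.
Proof.
move=> hp hq; rewrite /comb.
under eq_bigr do rewrite mulrnDr !mulrnA.
by rewrite big_split /= !sumrMnl -!/(comb N (ev _) l) !comb_ev.
Qed.

Lemma int_cancel (x y : int) : 0 < x -> y < 0 -> x *+ `|y|%N + y *+ `|x|%N = 0.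
Proof.
move=> hx hy; rewrite !pmulrn !mulrzz !abszE ltr0_norm // gtr0_norm //.
by rewrite mulrN mulrC addNr.
Qed.
Lemma proj n : forall N (a : nat -> nat -> int), exists M (C : nat -> nat -> nat),
  (forall j k, (j < M)%N -> (k < n)%N -> comb N (C j) (fun i => a i k) = 0) /\
  forall l : nat -> V, (forall j, (j < M)%N -> le (comb N (C j) l) 0) ->
    exists y, forall i, (i < N)%N -> le (l i + dot n y (a i)) 0.
Proof.
elim: n => [|n IH] N a.
  exists N, ev; split => // l hl; exists (fun _ => 0) => i hi.
  by rewrite /dot big_ord0 addr0 -(comb_ev l hi); apply: hl.
pose zs := [seq i <- iota 0 N | a i n == 0].
pose ps := [seq i <- iota 0 N | 0 < a i n].
pose qs := [seq i <- iota 0 N | a i n < 0].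
pose Nz := size zs; pose Np := size ps; pose Nq := size qs.
pose N' := (Nz + Np * Nq)%N.
pose pq p q := fun i' => (ev p i' * `|a q n| + ev q i' * `|a p n|)%N.
pose D j := if (j < Nz)%N then ev (nth 0%N zs j)
            else pq (nth 0%N ps ((j - Nz) %/ Nq)) (nth 0%N qs ((j - Nz) %% Nq)).
pose a' j k := comb N (D j) (fun i => a i k).
have [M' [C' [hC1 hC2]]] := IH N' a'.
have memz i : (i \in zs) = (a i n == 0) && (i < N)%N by rewrite mem_filter mem_iota.
have memp i : (i \in ps) = (0 < a i n) && (i < N)%N by rewrite mem_filter mem_iota.
have memq i : (i \in qs) = (a i n < 0) && (i < N)%N by rewrite mem_filter mem_iota.
have Dcase : forall j, (j < N')%N ->
    (exists2 i, i \in zs & D j = ev i) \/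
    (exists p q, [/\ p \in ps, q \in qs & D j = pq p q]).
  move=> j hj; rewrite /D; case: ifP => hjz.
    by left; exists (nth 0%N zs j) => //; apply: mem_nth.
  right; have hr : (j - Nz < Np * Nq)%N by rewrite ltn_subLR // leqNgt hjz.
  have hq0 : (0 < Nq)%N by move: hr; case: (Nq) => //; rewrite muln0.
  exists (nth 0%N ps ((j - Nz) %/ Nq)), (nth 0%N qs ((j - Nz) %% Nq)); split => //.
    by apply: mem_nth; rewrite ltn_divLR.
  by apply: mem_nth; rewrite ltn_pmod.
have Dz : forall i, i \in zs -> exists2 j, (j < N')%N & D j = ev i.
  move=> i hi; exists (index i zs); first by apply: ltn_addr; rewrite index_mem.
  by rewrite /D index_mem hi nth_index.
have Dpq : forall p q, p \in ps -> q \in qs -> exists2 j, (j < N')%N & D j = pq p q.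
  move=> p q hp hq; have hiq : (index q qs < Nq)%N by rewrite index_mem.
  have hq0 : (0 < Nq)%N by apply: leq_ltn_trans hiq.
  have hip : (index p ps < Np)%N by rewrite index_mem.
  exists (Nz + (index p ps * Nq + index q qs))%N.
    rewrite /N' -addnS leq_add2l; apply: (@leq_trans ((index p ps).+1 * Nq)).
      by rewrite mulSn addnC ltn_add2r.
    by rewrite leq_mul2r hip orbT.
  rewrite /D ltnNge leq_addr /= addKn divnMDl // divn_small // addn0.
  by rewrite modnMDl modn_small // !nth_index.
have a'0 : forall j, (j < N')%N -> a' j n = 0.
  move=> j hj; rewrite /a'; case: (Dcase j hj) => [[i hi ->]|[p [q [hp hq ->]]]].
    by move: hi; rewrite memz => /andP[/eqP h1 h2]; rewrite comb_ev.
  move: hp hq; rewrite memp memq => /andP[h1 h2] /andP[h3 h4].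
  by rewrite /pq comb_pq // int_cancel.
exists M', (fun j i => \sum_(j' < N') C' j j' * D j' i)%N; split.
  move=> j k hj hk; rewrite comb_comb.
  have : (k < n)%N \/ k = n by move: hk; rewrite ltnS leq_eqVlt => /orP[/eqP->|->]; [right|left].
  case=> [hkn|->]; first exact: hC1.
  by apply: comb0 => j' hj'; apply: a'0.
move=> l hl.
have [y' hy'] : exists y', forall j', (j' < N')%N -> le (comb N (D j') l + dot n y' (a' j')) 0.
  apply: hC2 => j hj; have := hl j hj; by rewrite comb_comb.
pose s i := l i + dot n y' (a i).
have hs : forall j', (j' < N')%N -> le (comb N (D j') s) 0.
  by move=> j' hj'; rewrite /s comb_row; apply: hy'.
have hZ : forall i, i \in zs -> le (s i) 0.
  move=> i hi; have [j hj hD] := Dz i hi; have := hs j hj.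
  by rewrite hD comb_ev //; move: hi; rewrite memz => /andP[].
have hPQ : forall p q, p \in ps -> q \in qs ->
    le (s p *+ `|a q n| + s q *+ `|a p n|) 0.
  move=> p q hp hq; have [j hj hD] := Dpq p q hp hq; have := hs j hj.
  rewrite hD /pq comb_pq //.
    by move: hp; rewrite memp => /andP[].
  by move: hq; rewrite memq => /andP[].
pose lo := [seq (s q, `|a q n|%N) | q <- qs].
pose hs2 := [seq (- s p, `|a p n|%N) | p <- ps].
have h1 : forall u, u \in lo -> (0 < u.2)%N.
  move=> u /mapP[q hq ->] /=; rewrite absz_gt0.
  by move: hq; rewrite memq => /andP[h _]; rewrite ltr0_neq0.
have h2 : forall w, w \in hs2 -> (0 < w.2)%N.
  move=> w /mapP[p hp ->] /=; rewrite absz_gt0.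
  by move: hp; rewrite memp => /andP[h _]; rewrite lt0r_neq0.
have h3 : forall u w, u \in lo -> w \in hs2 -> le (u.1 *+ w.2) (w.1 *+ u.2).
  move=> u w /mapP[q hq ->] /mapP[p hp ->] /=.
  apply: le_subl; rewrite mulNrn opprK addrC; exact: hPQ.
have [z [hzlo hzhi]] := choose_between h1 h2 h3.
exists (fun k => if k == n then z else y' k) => i hi.
rewrite /dot big_ord_recr /= eqxx.
have -> : \sum_(k < n) (if (widen_ord (leqnSn n) k : nat) == n then z else y' k) *~ a i k
          = dot n y' (a i).
  by apply: eq_bigr => k _ /=; rewrite ltn_eqF.
rewrite addrA -/(s i).
case: (ltgtP (a i n) 0) => ha.
- have hq : i \in qs by rewrite memq ha hi.
  have := hzlo (s i, `|a i n|%N) (map_f _ hq) => /= h.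
  have -> : a i n = - (`|a i n|%:Z) by rewrite abszE ltr0_norm // opprK.
  by rewrite mulrNz -pmulrn; apply: le_subr.
- have hp : i \in ps by rewrite memp ha hi.
  have := hzhi (- s i, `|a i n|%N) (map_f _ hp) => /= h.
  have -> : a i n = `|a i n|%:Z by rewrite abszE gtr0_norm.
  rewrite -pmulrn -(addrN (s i)) addrC [s i + _]addrC; exact: le_add.
- have hz : i \in zs by rewrite memz ha eqxx hi.
  by rewrite ha mulr0z addr0; apply: hZ.
Qed.
Hypothesis hnt : exists e : V, e != 0.

Lemma pos_elt : exists e : V, le 0 e /\ e != 0.
Proof.
have [e he] := hnt; case/orP: (le_total 0 e) => h; first by exists e.
exists (- e); split; last by rewrite oppr_eq0.
by rewrite -oppr0; apply: le_opp.
Qed.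

Lemma no_le_sub (v e : V) : le 0 e -> e != 0 -> ~ le v (v - e).
Proof.
move=> h1 h2 h3; have h4 : le (v - v) (v - e - v) by apply: le_add.
rewrite subrr addrC addKr in h4.
have h5 : le e 0 by have := le_opp h4; rewrite opprK oppr0.
by move/eqP: h2; apply; apply: le_anti.
Qed.

Definition cand M (l : nat -> V) (a : nat -> nat -> int) n (v : V) :=
  exists c : nat -> nat, [/\ (0 < \sum_(i < M) c i)%N,
    (forall k, (k < n)%N -> comb M c (fun i => a i k) = 0) &
    v *+ (\sum_(i < M) c i) = comb M c l].

Lemma comb_const M c (t : V) : comb M c (fun _ => t) = t *+ (\sum_(i < M) c i).
Proof. by rewrite /comb sumrMnr. Qed.

Lemma weak_dual M l a n y (t v : V) : cand M l a n v ->
  (forall i, (i < M)%N -> le (l i + dot n y (a i)) t) -> le v t.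
Proof.
case=> c [hm hk hv] hy.
have e : comb M c l = comb M c (fun i => l i + dot n y (a i)).
  rewrite comb_row /dot big1 ?addr0 // => k _; rewrite hk // mulr0z.
move: hm hv; case E: (\sum_(i < M) c i)%N => [//|m] _ hv.
apply: (@leMn2 _ _ m); rewrite hv e -E -comb_const.
apply: le_sum => i _; apply: leMn; exact: hy.
Qed.

Theorem dual M l a n :
  (exists mu, [/\ cand M l a n mu, (forall v, cand M l a n v -> le v mu) &
     (forall v, (forall y, exists2 i, (i < M)%N & le v (l i + dot n y (a i))) -> le v mu)])
  \/ ((forall v, ~ cand M l a n v) /\
      (forall v, ~ (forall y, exists2 i, (i < M)%N & le v (l i + dot n y (a i))))).
Proof.
have [K0 [C [hC1 hC2]]] := proj n M a.
have key : forall t, (forall j, (j < K0)%N -> (0 < \sum_(i < M) C j i)%N ->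
      le (comb M (C j) l) (t *+ \sum_(i < M) C j i)) ->
    exists y, forall i, (i < M)%N -> le (l i + dot n y (a i)) t.
  move=> t ht.
  suff [y hy] : exists y, forall i, (i < M)%N -> le (l i - t + dot n y (a i)) 0.
    exists y => i hi; apply: le_subl; have := hy i hi.
    by rewrite addrAC.
  apply: (hC2 (fun i => l i - t)) => j hj.
  have -> : comb M (C j) (fun i => l i - t) = comb M (C j) l - t *+ \sum_(i < M) C j i.
    by rewrite /comb -comb_const /comb -sumrB; apply: eq_bigr => i _; rewrite mulrnBl.
  case E : (\sum_(i < M) C j i)%N => [|m].
    rewrite mulr0n subr0 /comb big1 // => i _.
    have : (C j i <= \sum_(i < M) C j i)%N by rewrite (bigD1 i) //= leq_addr.
    by rewrite E leqn0 => /eqP ->; rewrite mulr0n.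
  by apply: le_subr; rewrite -E; apply: ht => //; rewrite E.
pose T := [seq j <- iota 0 K0 | (0 < \sum_(i < M) C j i)%N].
have memT j : (j \in T) = (0 < \sum_(i < M) C j i)%N && (j < K0)%N.
  by rewrite mem_filter mem_iota.
case: (eqVneq T [::]) => [eT|nT].
  right; have [e [he0 he]] := pos_elt.
  have hy : forall t, exists y, forall i, (i < M)%N -> le (l i + dot n y (a i)) t.
    move=> t; apply: key => j hj hp; suff : j \in T by rewrite eT.
    by rewrite memT hp hj.
  split.
    move=> v hv; have [y' hy'] := hy (v - e).
    exact: (no_le_sub he0 he (weak_dual hv hy')).
  move=> v hv; have [y' hy'] := hy (v - e); have [i hi hvi] := hv y'.
  exact: (no_le_sub he0 he (le_trans hvi (hy' i hi))).
left; have [j0 hj0 hmax] := exists_max (fun j => dv (\sum_(i < M) C j i) (comb M (C j) l)) nT.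
move: (hj0); rewrite memT => /andP[hp0 hk0].
pose mu := dv (\sum_(i < M) C j0 i) (comb M (C j0) l).
have cmu : cand M l a n mu.
  exists (C j0); split => //; first by move=> k hk; apply: hC1.
  by rewrite /mu dvK.
have [y hy] : exists y, forall i, (i < M)%N -> le (l i + dot n y (a i)) mu.
  apply: key => j hj hp; have hjT : j \in T by rewrite memT hp hj.
  rewrite -[X in le X _](dvK (comb M (C j) l) hp); apply: leMn; exact: hmax.
exists mu; split => //.
  by move=> v hv; apply: (weak_dual hv hy).
by move=> v hv; have [i hi hvi] := hv y; apply: le_trans hvi (hy i hi).
Qed.
End OG.
Section KK.
Variables (K : comNzSemiRingType) (n : nat).
Hypothesis hchar1 : 1 + 1 = 1 :> K.
Hypothesis hinv : forall x : K, x != 0 -> exists y, x * y = 1.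
Hypothesis htotal : forall u v : K, sle u v \/ sle v u.
Hypothesis hclosed : qf_alg_closed K.
Hypothesis hinfinite : forall s : seq K, exists x, x \notin s.

Lemma sle_refl (x : K) : sle x x.
Proof. by rewrite /sle -{1 2}(mulr1 x) -mulrDr hchar1 mulr1. Qed.
Lemma sle_trans (x y z : K) : sle x y -> sle y z -> sle x z.
Proof. by rewrite /sle => h1 h2; rewrite -h2 addrA h1. Qed.
Lemma sle_anti (x y : K) : sle x y -> sle y x -> x = y.
Proof. by rewrite /sle => h1 h2; rewrite -h1 addrC h2. Qed.
Lemma sle0 (x : K) : sle 0 x.
Proof. by rewrite /sle add0r. Qed.
Lemma sle_mulr (u v w : K) : sle u v -> sle (u * w) (v * w).
Proof. by rewrite /sle => h; rewrite -mulrDl h. Qed.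
Lemma sle_mul2 (a b c d : K) : sle a b -> sle c d -> sle (a * c) (b * d).
Proof.
move=> h1 h2; apply: sle_trans (sle_mulr c h1) _.
by rewrite ![b * _]mulrC; apply: sle_mulr.
Qed.
Lemma sle_addl (u v : K) : sle u (u + v).
Proof. by rewrite /sle addrA sle_refl. Qed.
Lemma sle_addr (u v : K) : sle v (u + v).
Proof. by rewrite addrC; apply: sle_addl. Qed.
Lemma sle_add (u v z : K) : sle u z -> sle v z -> sle (u + v) z.
Proof. by rewrite /sle => h1 h2; rewrite -addrA h2 h1. Qed.

Lemma sle_sumP (I : eqType) (s : seq I) (F : I -> K) z :
  (forall i, i \in s -> sle (F i) z) -> sle (\sum_(i <- s) F i) z.
Proof.
elim: s => [|a s ih] h; first by rewrite big_nil; exact: sle0.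
rewrite big_cons; apply: sle_add; first by apply: h; rewrite inE eqxx.
by apply: ih => i hi; apply: h; rewrite inE hi orbT.
Qed.

Lemma sle_term (I : eqType) (s : seq I) (F : I -> K) i :
  i \in s -> sle (F i) (\sum_(j <- s) F j).
Proof.
elim: s => [//|a s ih]; rewrite inE big_cons => /orP[/eqP ->|hi].
  exact: sle_addl.
apply: sle_trans (ih hi) _; exact: sle_addr.
Qed.

Lemma sum_attained (I : eqType) (s : seq I) (F : I -> K) :
  \sum_(i <- s) F i = 0 \/ exists2 i, i \in s & \sum_(j <- s) F j = F i.
Proof.
elim: s => [|a s ih]; first by left; rewrite big_nil.
rewrite big_cons; case: ih => [->|[i hi ->]].
  by right; exists a; rewrite ?inE ?eqxx ?addr0.
case: (htotal (F a) (F i)) => h.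
  by right; exists i; rewrite ?inE ?hi ?orbT.
by right; exists a; rewrite ?inE ?eqxx // addrC.
Qed.

Lemma oneK : (1 : K) != 0. Proof. exact: oner_neq0. Qed.

Lemma isu_neq0 (x : K) : isu x -> x != 0.
Proof.
move/isuP=> [y hy]; apply/eqP => e; move: hy; rewrite e mul0r => /eqP.
by rewrite eq_sym (negbTE oneK).
Qed.
Lemma neq0_isu (x : K) : x != 0 -> isu x.
Proof. by move=> h; apply/isuP; apply: hinv. Qed.

Lemma mulK_neq0 (x y : K) : x != 0 -> y != 0 -> x * y != 0.
Proof. by move=> hx hy; apply: isu_neq0; apply: isuM; apply: neq0_isu. Qed.
Lemma expK_neq0 (x : K) m : x != 0 -> x ^+ m != 0.
Proof. by move=> hx; elim: m => [|m ih]; rewrite ?expr0 ?oneK // exprS mulK_neq0. Qed.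

Lemma cancelK (u v w : K) : w != 0 -> u * w = v * w -> u = v.
Proof.
move=> hw e; have [y hy] := hinv hw.
by rewrite -(mulr1 u) -(mulr1 v) -hy !mulrA e.
Qed.
Lemma sle_cancel (u v w : K) : w != 0 -> sle (u * w) (v * w) -> sle u v.
Proof. by move=> hw; rewrite /sle -mulrDl; apply: cancelK. Qed.

Lemma sle_pow (u v : K) m : sle u v -> sle (u ^+ m) (v ^+ m).
Proof.
move=> h; elim: m => [|m ih]; first by rewrite !expr0; exact: sle_refl.
by rewrite !exprS; apply: sle_mul2.
Qed.

Lemma pow_eq (u v : K) m : sle v u -> v ^+ m.+1 = u ^+ m.+1 -> v = u.
Proof.
move=> h e.
have e1 : u * v ^+ m = v * v ^+ m.
  apply: sle_anti; last by apply: sle_mulr.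
  rewrite -exprS e exprS; apply: sle_mul2; [exact: sle_refl | exact: sle_pow].
case: (eqVneq v 0) => hv.
  case: (eqVneq u 0) => [->|hu]; first by rewrite hv.
  by move: e; rewrite hv expr0n /= => /eqP; rewrite eq_sym (negbTE (expK_neq0 _ hu)).
by symmetry; apply: (cancelK (expK_neq0 m hv)).
Qed.

Lemma pow_sle (u v : K) m : (0 < m)%N -> sle (u ^+ m) (v ^+ m) -> sle u v.
Proof.
case: m => // m _ h; case: (htotal u v) => // h2.
suff -> : u = v by exact: sle_refl.
apply: esym; eapply pow_eq; first exact h2.
apply: sle_anti; [exact: sle_pow h2 | exact: h].
Qed.

Definition le_gu (u v : GU K) : bool := val u + val v == val v.
Lemma le_guP u v : reflect (sle (val u) (val v)) (le_gu u v).
Proof. exact: eqP. Qed.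

Lemma gu_refl u : le_gu u u. Proof. apply/le_guP; exact: sle_refl. Qed.
Lemma gu_trans u v w : le_gu u v -> le_gu v w -> le_gu u w.
Proof. move=> /le_guP h1 /le_guP h2; apply/le_guP; exact: sle_trans h2. Qed.
Lemma gu_anti u v : le_gu u v -> le_gu v u -> u = v.
Proof. move=> /le_guP h1 /le_guP h2; apply: val_inj; exact: sle_anti. Qed.
Lemma gu_total u v : le_gu u v || le_gu v u.
Proof. by case: (htotal (val u) (val v)) => h; apply/orP; [left|right]; apply/le_guP. Qed.
Lemma gu_add u v w : le_gu u v -> le_gu (u + w) (v + w).
Proof. move=> /le_guP h; apply/le_guP; rewrite !valD; exact: sle_mulr. Qed.

Lemma gu_div m (x : GU K) : exists y : GU K, y *+ m.+1 = x.
Proof.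
pose p : {poly K} := 'X^(m.+1) + (val x)%:P.
have sp : size p = m.+2 by rewrite size_XnaddC.
have hx0 : val x != 0 by apply: isu_neq0; apply: (valP x).
have [y hy] : exists y, qroot p y by apply: hclosed; rewrite sp.
have pe : p.[y] = y ^+ m.+1 + val x by rewrite hornerD hornerXn hornerC.
have pn0 : p.[y] != 0.
  apply/eqP => e; have : sle (val x) p.[y] by rewrite pe; exact: sle_addr.
  by rewrite e /sle addr0 => /eqP; rewrite (negbTE hx0).
have cp i : p`_i = (i == m.+1)%:R + (if i == 0%N then val x else 0).
  by rewrite coefD coefXn coefC.
have c0 : p`_0 = val x by rewrite cp /= mulr0n add0r.
have cm : p`_(m.+1) = 1 by rewrite cp eqxx /= addr0.
have hy' : y ^+ m.+1 = val x.
  case: hy => [/eqP|[i [j [hij hi hj ei ej]]]]; first by rewrite (negbTE pn0).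
  have nz k : p`_k * y ^+ k = p.[y] -> k = 0%N \/ k = m.+1.
    move=> ek; rewrite cp in ek.
    case: (eqVneq k 0%N) => [->|k0]; first by left.
    case: (eqVneq k m.+1) => [->|km]; first by right.
    by move: pn0; rewrite -ek (negbTE k0) (negbTE km) addr0 mul0r eqxx.
  have [[ ei0 | eim ] [ ej0 | ejm ]] := (nz i ei, nz j ej).
  - by move: hij; rewrite ei0 ej0.
  - rewrite ei0 ejm c0 cm in ei ej.
    by rewrite -(mul1r (y ^+ _)) ej -ei expr0 mulr1.
  - rewrite ej0 eim c0 cm in ei ej.
    by rewrite -(mul1r (y ^+ _)) ei -ej expr0 mulr1.
  - by move: hij; rewrite eim ejm.
have uy : isu y.
  apply/isuP; have /isuP[z hz] := valP x; exists (y ^+ m * z).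
  by rewrite mulrA -exprS hy'.
exists (exist _ y uy); apply: val_inj; by rewrite valMn.
Qed.

Lemma gu_nt : exists e : GU K, e != 0.
Proof.
have [x hx] := hinfinite [:: 0; 1]; move: hx; rewrite !inE negb_or => /andP[h0 h1].
exists (exist _ x (neq0_isu h0)); apply: contra h1 => /eqP e.
by move: (f_equal val e) => /= ->.
Qed.
Definition dflt : expo n := nseq_tuple n 0%N.
Definition mkU (x : K) : GU K := insubd (0 : GU K) x.
Lemma val_mkU (x : K) : x != 0 -> val (mkU x) = x.
Proof. by move=> hx; rewrite /mkU val_insubd neq0_isu. Qed.
Lemma valU_neq0 (u : GU K) : val u != 0.
Proof. exact: isu_neq0 (valP u). Qed.

Section Poly.
Variables (P : mpoly K n) (g : expo n).
Let E := mexps P.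
Let M := size E.
Let al i := nth dflt E i.
Definition rl i : GU K := mkU (mcoef P (al i)).
Definition ra i k : int := (nth 0%N (al i) k)%:Z - (nth 0%N g k)%:Z.

Lemma E_uniq : uniq E.
Proof. by rewrite /E /mexps filter_uniq // undup_uniq. Qed.
Lemma memE a : (a \in E) = (mcoef P a != 0).
Proof.
rewrite /E /mexps mem_filter mem_undup; case h: (mcoef P a != 0) => //=.
exact: msuppP.
Qed.
Lemma al_coef i : (i < M)%N -> mcoef P (al i) != 0.
Proof. by move=> hi; rewrite -memE; apply: mem_nth. Qed.

Lemma bigE_ord (R : Type) (idx : R) (op : R -> R -> R) (F : expo n -> R) :
  \big[op/idx]_(a <- E) F a = \big[op/idx]_(i < M) F (al i).
Proof. by rewrite (big_nth dflt) big_mkord. Qed.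

Lemma Posz_sum (I : Type) (r : seq I) (F : I -> nat) :
  (\sum_(i <- r) F i)%N%:Z = \sum_(i <- r) (F i)%:Z.
Proof. by elim: r => [|x r ih]; rewrite ?big_nil // !big_cons PoszD ih. Qed.

Lemma comb_ra c k : comb M c (fun i => ra i k) =
  (\sum_(i < M) c i * nth 0%N (al i) k)%N%:Z - (nth 0%N g k * \sum_(i < M) c i)%N%:Z.
Proof.
rewrite /comb /ra; under eq_bigr do rewrite mulrnBl.
rewrite sumrB !Posz_sum big_distrr /= Posz_sum; congr (_ - _); apply: eq_bigr => i _;
  by rewrite pmulrn mulrzz -PoszM mulnC.
Qed.

Lemma val_comb c : val (comb M c rl) = \prod_(i < M) mcoef P (al i) ^+ c i.
Proof.
rewrite /comb val_sum; apply: eq_bigr => i _.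
by rewrite valMn val_mkU // al_coef.
Qed.

Lemma prod_neq0 (I : Type) (r : seq I) (F : I -> K) :
  (forall i, F i != 0) -> \prod_(i <- r) F i != 0.
Proof. by move=> h; elim: r => [|x r ih]; rewrite ?big_nil ?oneK // big_cons mulK_neq0. Qed.

Lemma prod_neq0_in (I : eqType) (r : seq I) (F : I -> K) :
  (forall i, i \in r -> F i != 0) -> \prod_(i <- r) F i != 0.
Proof.
elim: r => [|x r ih] h; rewrite ?big_nil ?oneK // big_cons mulK_neq0 //.
  by apply: h; rewrite inE eqxx.
by apply: ih => i hi; apply: h; rewrite inE hi orbT.
Qed.

Lemma cand_to nu : conv_cand P g nu -> nu != 0 /\ cand M rl ra n (mkU nu).
Proof.
case=> m [c [hm hs hk hv]].
have hprod : \prod_(a <- E) mcoef P a ^+ c a != 0.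
  by apply: prod_neq0_in => a; rewrite memE => h; apply: expK_neq0.
have hnu : nu != 0.
  apply/eqP => e; move: hprod; rewrite -/E -hv e expr0n.
  by case: m hm {hs hk hv} => // m _; rewrite /= eqxx.
split => //; exists (fun i => c (al i)); split.
- by rewrite -(bigE_ord _ _ c) hs.
- move=> k hk'.
  have e1 : (\sum_(a <- E) c a * nth 0%N a k = m * nth 0%N g k)%N.
    have := hk (Ordinal hk'); rewrite (tnth_nth 0%N) /= => <-.
    by apply: eq_bigr => a _; rewrite (tnth_nth 0%N).
  rewrite comb_ra -(bigE_ord _ _ (fun a => (c a * nth 0%N a k)%N)) e1.
  by rewrite -(bigE_ord _ _ c) hs mulnC subrr.
- apply: val_inj; rewrite valMn val_mkU // val_comb -(bigE_ord _ _ c) hs hv.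
  by rewrite bigE_ord.
Qed.

Lemma cand_from u : cand M rl ra n u -> conv_cand P g (val u).
Proof.
case=> c [hm hk hv].
have cE : forall i, (i < M)%N -> c (index (al i) E) = c i.
  by move=> i hi; rewrite /al index_uniq // E_uniq.
exists (\sum_(i < M) c i)%N, (fun a => c (index a E)); split => //.
- by rewrite bigE_ord; apply: eq_bigr => i _; rewrite cE.
- move=> k; have := hk k (ltn_ord k); rewrite comb_ra => /eqP.
  rewrite subr_eq0 eqz_nat => /eqP e.
  rewrite bigE_ord (tnth_nth 0%N g) -mulnC -e; apply: eq_bigr => i _.
  by rewrite cE // (tnth_nth 0%N).
- rewrite -valMn hv val_comb bigE_ord; apply: eq_bigr => i _.
  by rewrite cE.
Qed.
Definition Xs (y : nat -> GU K) (b : expo n) : GU K := \sum_(k < n) y k *+ nth 0%N b k.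

Lemma val_Xs y b : val (Xs y b) = mono b (fun k : 'I_n => val (y k)).
Proof. by rewrite val_sum /mono; apply: eq_bigr => k _; rewrite valMn (tnth_nth 0%N). Qed.

Lemma dot_ra y i : dot n y (ra i) + Xs y g = Xs y (al i).
Proof.
rewrite /dot /ra /Xs -big_split /=; apply: eq_bigr => k _.
by rewrite mulrzBr -!pmulrn subrK.
Qed.

Lemma gu_addK (u v w : GU K) : le_gu (u + w) (v + w) -> le_gu u v.
Proof. by move=> h; have := gu_add (- w) h; rewrite !addrK. Qed.

Let DU := dual gu_refl gu_trans gu_anti gu_total gu_add gu_div gu_nt M rl ra n.

Lemma max_transfer mu0 : cand M rl ra n mu0 ->
  (forall v, cand M rl ra n v -> le_gu v mu0) -> conv_max P g (val mu0).
Proof.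
move=> hc hmax; split; first exact: cand_from.
move=> nu hnu; have [h0 hc'] := cand_to hnu.
by have /le_guP := hmax _ hc'; rewrite val_mkU.
Qed.

Lemma convE nu : conv_cand P g nu -> exists mu, conv_max P g mu.
Proof.
move=> h; have [h0 hc] := cand_to h.
case: DU => [[mu0 [c1 c2 c3]]|[n1 n2]].
  by exists (val mu0); apply: max_transfer.
by case: (n1 _ hc).
Qed.

Lemma convD nu : nu != 0 ->
  (forall x : 'I_n -> K, (forall k, x k != 0) -> sle (nu * mono g x) (meval P x)) ->
  exists2 mu, conv_max P g mu & sle nu mu.
Proof.
move=> hnu h.
have hyp : forall y, exists2 i, (i < M)%N & le_gu (mkU nu) (rl i + dot n y (ra i)).
  move=> y; pose x := fun k : 'I_n => val (y k).
  have hx := h x (fun k => valU_neq0 _).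
  have hm : mono g x = val (Xs y g) by rewrite val_Xs.
  have hmn : nu * mono g x != 0 by rewrite hm mulK_neq0 ?valU_neq0.
  case: (sum_attained (undup (msupp P)) (fun a => mcoef P a * mono a x)) => [e|[a ha e]].
    by move: hx; rewrite /meval e /sle addr0 => hx; rewrite hx eqxx in hmn.
  move: hx; rewrite /meval e => hx.
  case: (eqVneq (mcoef P a) 0) => ha0.
    by move: hx; rewrite ha0 mul0r /sle addr0 => hx; rewrite hx eqxx in hmn.
  have haE : a \in E by rewrite memE.
  exists (index a E); first by rewrite index_mem.
  have hal : al (index a E) = a by rewrite /al nth_index.
  apply: (@gu_addK _ _ (Xs y g)); rewrite -addrA dot_ra hal.
  apply/le_guP; rewrite !valD val_mkU // -hm /rl hal val_mkU // val_Xs.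
  exact: hx.
case: DU => [[mu0 [c1 c2 c3]]|[n1 n2]]; last by case: (n2 _ hyp).
exists (val mu0); first exact: max_transfer.
by have /le_guP := c3 _ hyp; rewrite val_mkU.
Qed.

Lemma sle_prod (I : eqType) (s : seq I) (F G : I -> K) :
  (forall i, i \in s -> sle (F i) (G i)) -> sle (\prod_(i <- s) F i) (\prod_(i <- s) G i).
Proof.
elim: s => [|a s ih] h; first by rewrite !big_nil; exact: sle_refl.
rewrite !big_cons; apply: sle_mul2; first by apply: h; rewrite inE eqxx.
by apply: ih => i hi; apply: h; rewrite inE hi orbT.
Qed.

Lemma term_le (Q : mpoly K n) a x : a \in undup (msupp Q) ->
  sle (mcoef Q a * mono a x) (meval Q x).
Proof. by move=> ha; apply: (sle_term (fun b => mcoef Q b * mono b x) ha). Qed.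

Lemma cand_le nu : conv_cand P g nu -> forall x, sle (nu * mono g x) (meval P x).
Proof.
case=> m [c [hm hs hk hv]] x.
apply: (pow_sle hm).
have e1 : (nu * mono g x) ^+ m = \prod_(a <- E) (mcoef P a * mono a x) ^+ c a.
  rewrite exprMn hv.
  under [RHS]eq_bigr do rewrite exprMn.
  rewrite big_split /=; congr (_ * _).
  rewrite /mono.
  under [RHS]eq_bigr do rewrite -prodrXl.
  rewrite exchange_big /= -prodrXl; apply: eq_bigr => k _.
  rewrite -exprM; under eq_bigr do rewrite -exprM.
  rewrite prodrXr; congr (_ ^+ _).
  by rewrite mulnC -hk; apply: eq_bigr => a _; rewrite mulnC.
rewrite e1 -hs -prodrXr; apply: sle_prod => a ha; apply: sle_pow.
by apply: term_le; move: ha; rewrite /E /mexps mem_filter => /andP[].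
Qed.
End Poly.
Lemma conv_coef_cases (P : mpoly K n) g : conv_coef P g = 0 \/ conv_max P g (conv_coef P g).
Proof.
rewrite /conv_coef; case: excluded_middle_informative => h; last by left.
by right; case: constructive_indefinite_description.
Qed.

Lemma max_unique (P : mpoly K n) g mu mu' : conv_max P g mu -> conv_max P g mu' -> mu = mu'.
Proof. by move=> [h1 h2] [h3 h4]; apply: sle_anti; [apply: h4 | apply: h2]. Qed.

Lemma coef_max (P : mpoly K n) g mu : conv_max P g mu -> conv_coef P g = mu.
Proof.
move=> hm; rewrite /conv_coef; case: excluded_middle_informative => h.
  case: constructive_indefinite_description => /= mu' hmu'; exact: max_unique hmu' hm.
by case: h; exists mu.
Qed.

Lemma cand_neq0 (P : mpoly K n) g nu : conv_cand P g nu -> nu != 0.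
Proof. by move=> h; case: (cand_to h). Qed.

Lemma mem_supp (Q : mpoly K n) a : mcoef Q a != 0 -> a \in undup (msupp Q).
Proof. by move=> h; rewrite mem_undup; apply: msuppP. Qed.

Lemma meval_le (P Q : mpoly K n) x :
  (forall a, mcoef P a != 0 -> sle (mcoef P a * mono a x) (meval Q x)) ->
  sle (meval P x) (meval Q x).
Proof.
move=> h; apply: sle_sumP => a _; case: (eqVneq (mcoef P a) 0) => ha.
  by rewrite ha mul0r; exact: sle0.
exact: h.
Qed.

Lemma coef_cand (P : mpoly K n) a : mcoef P a != 0 -> conv_cand P a (mcoef P a).
Proof.
move=> ha; have haE : a \in mexps P by rewrite memE.
have uE := E_uniq P.
exists 1%N, (fun b => nat_of_bool (b == a)); split => //.
- rewrite (bigD1_seq a) //= eqxx big1 // => b hb; by rewrite (negbTE hb).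
- move=> k; rewrite (bigD1_seq a) //= eqxx big1 ?addn0 ?mul1n // => b hb.
  by rewrite (negbTE hb).
- rewrite expr1 (bigD1_seq a) //= eqxx expr1 big1 ?mulr1 // => b hb.
  by rewrite (negbTE hb) expr0.
Qed.

Lemma part_a (P : mpoly K n) x : meval P x = meval (conv P) x.
Proof.
apply: sle_anti; apply: meval_le => a ha.
  have [mu hmu] := convE (coef_cand ha).
  have hc : mcoef (conv P) a = mu by rewrite /= (coef_max hmu).
  have hmu0 : mu != 0 by apply: (cand_neq0 hmu.1).
  have hs : mcoef (conv P) a != 0 by rewrite hc.
  apply: (sle_trans _ (term_le x (mem_supp hs))).
  rewrite hc; apply: sle_mulr; apply: hmu.2; exact: coef_cand.
move: ha => /=; case: (conv_coef_cases P a) => [->|hm]; first by rewrite eqxx.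
move=> _; exact: cand_le hm.1 x.
Qed.

Lemma dir (P Q : mpoly K n) : (forall x, meval P x = meval Q x) ->
  forall g mu, conv_max P g mu -> exists2 mu', conv_max Q g mu' & sle mu mu'.
Proof.
move=> h g mu hm; apply: convD (cand_neq0 hm.1) _ => x _.
rewrite -h; exact: cand_le hm.1 x.
Qed.

Lemma main (P Q : mpoly K n) :
  (forall x : 'I_n -> K, meval P x = meval (conv P) x) /\
  ((forall x : 'I_n -> K, meval P x = meval Q x) <->
   (forall g : expo n, mcoef (conv P) g = mcoef (conv Q) g)).
Proof.
split; first exact: part_a.
split.
  move=> h g /=.
  have h' : forall x, meval Q x = meval P x by move=> x; rewrite h.
  case: (conv_coef_cases P g) => [eP|hP].
    case: (conv_coef_cases Q g) => [eQ|hQ]; first by rewrite eP eQ.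
    have [mu'' h1 _] := dir h' hQ.
    by move: (cand_neq0 h1.1); rewrite -(coef_max h1) eP eqxx.
  have [mu' h1 h2] := dir h hP.
  have [mu'' h3 h4] := dir h' h1.
  rewrite (coef_max h1); have e := max_unique h3 hP; rewrite e in h4.
  exact: sle_anti.
move=> h x; rewrite part_a [RHS]part_a; apply: sle_anti; apply: meval_le => a ha.
  by rewrite h; apply: term_le; apply: mem_supp; rewrite -h.
by rewrite -h; apply: term_le; apply: mem_supp; rewrite h.
Qed.
End KK.

Theorem lemma3p6 (K : comNzSemiRingType) (n : nat)
  (hchar1 : 1 + 1 = 1 :> K)
  (hinv : forall x : K, x != 0 -> exists y, x * y = 1)
  (htotal : forall u v : K, sle u v \/ sle v u)
  (hclosed : qf_alg_closed K)
  (hinfinite : forall s : seq K, exists x, x \notin s)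
  (P Q : mpoly K n) :
  (forall x : 'I_n -> K, meval P x = meval (conv P) x) /\
  ((forall x : 'I_n -> K, meval P x = meval Q x) <->
   (forall g : expo n, mcoef (conv P) g = mcoef (conv Q) g)).
Proof. exact: (main hchar1 hinv htotal hclosed hinfinite). Qed.
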